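(* For every $n\ge1$, $N(0)=\#\Big\{(k_1,\dots,k_n)\in\mathbb{Z}^n:0\le k_i\le s_i-2,\ \sum_{i=1}^n\frac{k_i}{s_i}\le1\Big\}-1$.
   Context: Sylvester numbers: $s_0=2$, $s_{k+1}=1+\prod_{i=0}^ks_i$. Fix $n\ge1$, $d=\prod_{i=0}^ns_i$, $a_i=d/s_i$ for $0\le i\le n$, $a_{n+1}=1$. For $\ell\in\{0,\dots,d-1\}$ let $\tilde\theta_i(\ell)=\{\ell/s_i\}$ (fractional part) for $0\le i\le n$ and $\tilde\theta_{n+1}(\ell)=\ell/d$; $T_0(\ell)=\{i\in\{0,\dots,n+1\}:\tilde\theta_i(\ell)=0\}$, $T_1(\ell)=\{0,\dots,n+1\}\setminus T_0(\ell)$; $A(\ell)=\sum_{i\in T_1(\ell)}(\frac d2-a_i)$, $B(\ell)=\sum_{i\in T_1(\ell)}(d\tilde\theta_i(\ell)-\frac d2)$. $N(\ell)$ is the number of integer tuples $(k_i)_{i\in T_0(\ell)}$ with $0\le k_i\le s_i-2$ for $0\le i\le n$ and $0\le k_{n+1}\le d-2$ (if $n+1\in T_0(\ell)$), such that $A(\ell)+\sum_{i\in T_0(\ell)}k_ia_i=d$ and $B(\ell)=0$ (so $N(\ell)=0$ if $B(\ell)\ne0$). *)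

(* Defs.v *)
From HB Require Import structures.
From mathcomp Require Import all_boot all_order all_algebra.
Unset Printing Implicit Defensive.
Import Order.TTheory GRing.Theory Num.Theory.

Fixpoint sylv_seq (k : nat) : seq nat :=
  match k with
  | 0 => [:: 2]
  | k'.+1 => let s := sylv_seq k' in rcons s (1 + \prod_(x <- s) x)
  end.

Definition sylv (k : nat) : nat := nth 0 (sylv_seq k) k.

Definition dS (n : nat) : nat := \prod_(i < n.+1) sylv i.

(* Indices 0..n+1 are represented by 'I_(n.+2). *)
Definition aS (n : nat) (i : 'I_(n.+2)) : nat :=
  if (i <= n)%N then dS n %/ sylv i else 1.

Local Open Scope ring_scope.

(* theta~_i(l) = {l / s_i} for i <= n (for natural l this is (l mod s_i)/s_i),
   theta~_(n+1)(l) = l / d *)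
Definition theta (n l : nat) (i : 'I_(n.+2)) : rat :=
  if (i <= n)%N then (l %% sylv i)%:R / (sylv i)%:R
  else l%:R / (dS n)%:R.

Definition T0 (n l : nat) : {set 'I_(n.+2)} := [set i | theta n l i == 0].
Definition T1 (n l : nat) : {set 'I_(n.+2)} := ~: T0 n l.

Definition Aq (n l : nat) : rat :=
  \sum_(i in T1 n l) ((dS n)%:R / 2 - (aS n i)%:R).
Definition Bq (n l : nat) : rat :=
  \sum_(i in T1 n l) ((dS n)%:R * theta n l i - (dS n)%:R / 2).

Definition kbound (n : nat) (i : 'I_(n.+2)) : nat :=
  if (i <= n)%N then (sylv i - 2)%N else (dS n - 2)%N.

(* N(l): tuples (k_i)_(i in T0) are encoded as functions on all of 0..n+1
   that vanish outside T0 (values in 'I_d, which contains every admissible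
   value since all bounds are < d). *)
Definition N (n l : nat) : nat :=
  #|[set k : {ffun 'I_(n.+2) -> 'I_(dS n)} |
      [forall i, if i \in T0 n l then (k i <= kbound n i)%N
                 else (nat_of_ord (k i) == 0%N)]
      && (Aq n l + \sum_(i in T0 n l) (k i)%:R * (aS n i)%:R == (dS n)%:R)
      && (Bq n l == 0)]|.

(* #{(k_1..k_n) in Z^n : 0 <= k_i <= s_i - 2, sum_i k_i/s_i <= 1};
   index j : 'I_n stands for i = j+1. Values lie in 'I_(dS n) since s_i - 2 < d. *)
Definition Mcount (n : nat) : nat :=
  #|[set k : {ffun 'I_n -> 'I_(dS n)} |
      [forall j, (k j <= sylv j.+1 - 2)%N]
      && (\sum_(j < n) (k j)%:R / (sylv j.+1)%:R <= (1 : rat))]|.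

(* Main.v *)
Require Import Defs.
From mathcomp Require Import all_boot all_order all_algebra.
Import Order.TTheory GRing.Theory Num.Theory.

Lemma size_sylv_seq k : size (sylv_seq k) = k.+1.
Proof. by elim: k => //= k IH; rewrite size_rcons IH. Qed.

Lemma all_pos_sylv k : all (fun x => 0 < x)%N (sylv_seq k).
Proof. by elim: k => //= k IH; rewrite all_rcons IH andbT. Qed.

Lemma sylv_gt0 i : (0 < sylv i)%N.
Proof.
rewrite /sylv; have /allP := all_pos_sylv i; apply.
by apply: mem_nth; rewrite size_sylv_seq.
Qed.

Lemma dS_gt0 n : (0 < dS n)%N.
Proof. by rewrite /dS prodn_gt0 // => i; apply: sylv_gt0. Qed.

Lemma dvd_sylv_dS n (i : 'I_n.+1) : (sylv i %| dS n)%N.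
Proof. by rewrite /dS (bigD1 i) //= dvdn_mulr. Qed.

Lemma aS_ge2 n (j : 'I_n) : (2 <= dS n %/ sylv j.+1)%N.
Proof.
rewrite /dS big_ord_recl /=.
have -> : sylv (@ord0 n) = 2 by [].
have hd : (sylv j.+1 %| \prod_(i < n) sylv (lift ord0 i))%N.
  by rewrite (bigD1 j) //= dvdn_mulr.
rewrite -muln_divA //.
have : (0 < \prod_(i < n) sylv (lift ord0 i) %/ sylv j.+1)%N.
  rewrite divn_gt0 ?sylv_gt0 //; apply: dvdn_leq => //.
  by rewrite prodn_gt0 // => i; apply: sylv_gt0.
by case: (_ %/ _)%N => // m _; rewrite mulnS.
Qed.

Local Open Scope ring_scope.

Lemma T0_0 n : T0 n 0 = setT.
Proof.
apply/setP => i; rewrite !inE /theta; case: ifP => _; by rewrite ?mod0n mul0r.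
Qed.

Definition Npred n (k : {ffun 'I_(n.+2) -> 'I_(dS n)}) :=
  [forall i, (k i <= kbound n i)%N] &&
  (\sum_i (k i)%:R * (aS n i)%:R == (dS n)%:R :> rat).

Lemma N0E n : N n 0 = #|[set k | Npred n k]|.
Proof.
rewrite /N; apply: eq_card => k; rewrite !inE /Npred.
have hA : Aq n 0 = 0 by rewrite /Aq /T1 T0_0 setCT big_set0.
have hB : Bq n 0 = 0 by rewrite /Bq /T1 T0_0 setCT big_set0.
rewrite hA hB add0r eqxx andbT T0_0.
congr (_ && _).
  by apply: eq_forallb => i; rewrite in_setT.
by rewrite (eq_bigl xpredT) // => i; rewrite in_setT.
Qed.

From mathcomp Require Import zify.

Lemma NpredE n k : Npred n k =
  [forall i, (k i <= kbound n i)%N] && (\sum_i (k i * aS n i) == dS n)%N.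
Proof.
rewrite /Npred; congr (_ && _).
by rewrite -(eqr_nat rat) natr_sum; under eq_bigr do rewrite natrM.
Qed.

Lemma ord_cases n (i : 'I_n.+2) :
  i = ord0 \/ (exists j : 'I_n, i = lift ord0 (widen_ord (leqnSn n) j))
  \/ i = ord_max.
Proof.
case: i => [[|t] ht]; first by left; apply: val_inj.
case: (ltnP t n) => htn.
  by right; left; exists (Ordinal htn); apply: val_inj; rewrite /= /bump /= add1n.
by right; right; apply: val_inj => /=; lia.
Qed.

Lemma liftw n (j : 'I_n) : nat_of_ord (lift ord0 (widen_ord (leqnSn n) j)) = j.+1.
Proof. by rewrite /= /bump /= add1n. Qed.

Definition gM n (k : {ffun 'I_(n.+2) -> 'I_(dS n)}) : {ffun 'I_n -> 'I_(dS n)} :=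
  [ffun j : 'I_n => k (lift ord0 (widen_ord (leqnSn n) j))].
Arguments gM {n}.

Lemma aS_mid n (j : 'I_n) : aS n (lift ord0 (widen_ord (leqnSn n) j)) = (dS n %/ sylv j.+1)%N.
Proof. by rewrite /aS liftw ltn_ord. Qed.

Lemma aS_last n : aS n ord_max = 1%N.
Proof. by rewrite /aS /= ltnn. Qed.

Lemma kbound_mid n (j : 'I_n) : kbound n (lift ord0 (widen_ord (leqnSn n) j)) = (sylv j.+1 - 2)%N.
Proof. by rewrite /kbound liftw ltn_ord. Qed.

Lemma kbound_last n : kbound n ord_max = (dS n - 2)%N.
Proof. by rewrite /kbound /= ltnn. Qed.

Lemma kbound_0 n : kbound n ord0 = 0%N.
Proof. by []. Qed.

Lemma sumsplit n (k : {ffun 'I_(n.+2) -> 'I_(dS n)}) :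
  (\sum_i (k i * aS n i) = k ord0 * aS n ord0 +
     \sum_(j < n) gM k j * (dS n %/ sylv j.+1) + k ord_max)%N.
Proof.
rewrite big_ord_recl big_ord_recr /= -addnA; congr (_ + (_ + _))%N.
  by apply: eq_bigr => j _; rewrite ffunE aS_mid.
have -> : lift ord0 (@ord_max n) = ord_max by apply: val_inj.
by rewrite aS_last muln1.
Qed.

Definition Ssum n (m : {ffun 'I_n -> 'I_(dS n)}) :=
  (\sum_(j < n) m j * (dS n %/ sylv j.+1))%N.
Arguments Ssum {n}.

Lemma dvd_mid n (j : 'I_n) : (sylv j.+1 %| dS n)%N.
Proof.
have h : (j.+1 < n.+1)%N by rewrite ltnS.
exact: (dvd_sylv_dS n (Ordinal h)).
Qed.

Lemma McE n (m : {ffun 'I_n -> 'I_(dS n)}) :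
  (\sum_(j < n) (m j)%:R / (sylv j.+1)%:R <= (1:rat)) = (Ssum m <= dS n)%N.
Proof.
rewrite /Ssum -(ler_nat rat) natr_sum.
have -> : (\sum_(j < n) ((m j * (dS n %/ sylv j.+1))%:R : rat)) =
   (dS n)%:R * \sum_(j < n) (m j)%:R / (sylv j.+1)%:R.
  rewrite mulr_sumr; apply: eq_bigr => j _.
  rewrite natrM natr_div ?dvd_mid ?unitfE ?pnatr_eq0 -?lt0n ?sylv_gt0 //.
  by rewrite mulrCA.
rewrite -{2}(mulr1 ((dS n)%:R : rat)) ler_pM2l // ltr0n; exact: dS_gt0.
Qed.

Definition toI n (x : nat) : 'I_(dS n) := Ordinal (ltn_pmod x (dS_gt0 n)).

Definition mv n (m : {ffun 'I_n -> 'I_(dS n)}) (t : nat) : nat :=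
  odflt 0%N (omap (fun j : 'I_n => nat_of_ord (m j)) (insub t)).
Arguments mv {n}.

Definition fN n (m : {ffun 'I_n -> 'I_(dS n)}) : {ffun 'I_(n.+2) -> 'I_(dS n)} :=
  [ffun i : 'I_(n.+2) => toI n (if nat_of_ord i == 0%N then 0%N
     else if (nat_of_ord i <= n)%N then mv m (nat_of_ord i).-1
     else (dS n - Ssum m)%N)].

Arguments fN {n}.

Definition Mpred n (m : {ffun 'I_n -> 'I_(dS n)}) :=
  [forall j, (m j <= sylv j.+1 - 2)%N] && (Ssum m <= dS n)%N.

Lemma fN0 n m : nat_of_ord (@fN n m ord0) = 0%N.
Proof. by rewrite ffunE /= mod0n. Qed.

Lemma fNmid n m (j : 'I_n) :
  nat_of_ord (fN m (lift ord0 (widen_ord (leqnSn n) j))) = m j.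
Proof.
rewrite ffunE !liftw /= ltn_ord /mv (valK j) /= modn_small // ltn_ord.
Qed.

Lemma fNlast n m : (0 < @Ssum n m)%N -> nat_of_ord (fN m ord_max) = (dS n - Ssum m)%N.
Proof.
move=> h; rewrite ffunE /= ltnn modn_small //.
have := dS_gt0 n; lia.
Qed.

Lemma gf n m : gM (@fN n m) = m.
Proof. by apply/ffunP => j; apply: val_inj; rewrite /gM ffunE; exact: fNmid. Qed.

Definition zM n : {ffun 'I_n -> 'I_(dS n)} := [ffun _ => toI n 0].

Lemma gM_in n k : Npred n k -> Mpred n (gM k) && (gM k != zM n).
Proof.
rewrite NpredE => /andP[/forallP hb /eqP he].
have h0 : nat_of_ord (k ord0) = 0%N by have := hb ord0; rewrite kbound_0; lia.
move: he; rewrite sumsplit h0 mul0n add0n => he.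
have hl := hb ord_max; rewrite kbound_last in hl.
apply/andP; split.
  apply/andP; split.
    apply/forallP => j; rewrite ffunE.
    by have := hb (lift ord0 (widen_ord (leqnSn n) j)); rewrite kbound_mid.
  rewrite /Ssum; lia.
apply/eqP => hz; move: he; rewrite hz big1 => [|j _]; last by rewrite ffunE /= mod0n.
have := dS_gt0 n; lia.
Qed.

Lemma fN_in n m : Mpred n m -> m != zM n -> Npred n (fN m).
Proof.
move=> /andP[/forallP hb hS] hz.
have [j hj] : exists j, (0 < m j)%N.
  apply/existsP; apply: contraNT hz => /existsPn h; apply/eqP/ffunP => j.
  apply: val_inj; rewrite ffunE /= mod0n.
  by move: (h j); rewrite lt0n negbK => /eqP.
have hS2 : (2 <= Ssum m)%N.
  rewrite /Ssum (bigD1 j) //=.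
  have h2 := aS_ge2 n j.
  have h3 : (dS n %/ sylv j.+1 <= m j * (dS n %/ sylv j.+1))%N by rewrite leq_pmull.
  by apply: leq_trans h2 (leq_trans h3 (leq_addr _ _)).
rewrite NpredE; apply/andP; split.
  apply/forallP => i; have [->|[[j' ->]|->]] := ord_cases _ i.
  - by rewrite fN0.
  - by rewrite fNmid kbound_mid.
  - rewrite fNlast ?kbound_last; lia.
apply/eqP; rewrite sumsplit gf fN0 fNlast; last by lia.
rewrite -/(Ssum m); lia.
Qed.

Lemma gM_inj n k k' : Npred n k -> Npred n k' -> gM k = gM k' -> k = k'.
Proof.
rewrite !NpredE => /andP[/forallP hb /eqP he] /andP[/forallP hb' /eqP he'] hg.
have h0 : nat_of_ord (k ord0) = 0%N by have := hb ord0; rewrite kbound_0; lia.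
have h0' : nat_of_ord (k' ord0) = 0%N by have := hb' ord0; rewrite kbound_0; lia.
apply/ffunP => i; apply: val_inj; case: (ord_cases _ i) => [->|[[j ->]|->]].
- by rewrite /= h0 h0'.
- by move/ffunP: hg => hg; have := hg j; rewrite !ffunE => ->.
- move: he he'; rewrite !sumsplit hg h0 h0' /=; lia.
Qed.

Theorem lemma6p7 (n : nat) (hn : (1 <= n)%N) :
  ((N n 0)%:Z = (Mcount n)%:Z - 1)%R.
Proof.
rewrite N0E /Mcount.
set NS := [set k | Npred n k].
set MS := [set k : {ffun 'I_n -> 'I_(dS n)} | _].
have hM : MS = [set m | Mpred n m].
  by apply/setP => m; rewrite !inE McE.
have hz : zM n \in MS.
  rewrite hM inE; apply/andP; split.
    by apply/forallP => j; rewrite ffunE /= mod0n.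
  by rewrite /Ssum big1 // => j _; rewrite ffunE /= mod0n.
have himg : [set gM k | k in NS] = MS :\ zM n.
  apply/setP => m; rewrite in_setD1 hM inE; apply/imsetP/idP.
    move=> [k]; rewrite inE => /gM_in hk ->.
    by rewrite andbC.
  move=> /andP[hzm hm]; exists (fN m); last by rewrite gf.
  by rewrite inE; apply: fN_in.
have hc : #|[set gM k | k in NS]| = #|NS|.
  by apply: card_in_imset => k k'; rewrite !inE; apply: gM_inj.
rewrite (cardsD1 (zM n) MS) hz -himg hc add1n.
by rewrite -(addn1 #|NS|) PoszD addrK.
Qed.
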